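(* The linear subspace $\mathsf{CDUC}_d$ of linear maps on $\mathcal{M}_d(\mathbb{C})$ is stable under composition, but $\mathsf{DUC}_d$ is not. Moreover, for pairs $(A_1,B_1),(A_2,B_2)$ of $d\times d$ complex matrices with $\operatorname{diag}(A_k)=\operatorname{diag}(B_k)$, and for $i,j\in\{1,2\}$: if $i=j$ then $\Phi^{(i)}_{(A_1,B_1)}\circ\Phi^{(j)}_{(A_2,B_2)}=\Phi^{(2)}_{(\mathfrak A,\mathfrak B)}$, and if $i\ne j$ then $\Phi^{(i)}_{(A_1,B_1)}\circ\Phi^{(j)}_{(A_2,B_2)}=\Phi^{(1)}_{(\mathfrak A,\mathfrak B)}$, where in both cases $(\mathfrak A,\mathfrak B)=(A_1,B_1)\circ_i(A_2,B_2)$.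
   Context: $\mathcal{DU}_d$ is the group of diagonal unitary $d\times d$ matrices. A linear map $\Phi$ on $\mathcal{M}_d(\mathbb{C})$ is DUC if $\Phi(UXU^* )=U^*\Phi(X)U$ for all $X$ and $U\in\mathcal{DU}_d$, and CDUC if $\Phi(UXU^* )=U\Phi(X)U^*$; $\mathsf{DUC}_d$, $\mathsf{CDUC}_d$ are the sets of such maps. A set $K$ of maps is stable under composition if $\Phi_1\circ\Phi_2\in K$ for all $\Phi_1,\Phi_2\in K$. Notation: $\odot$ is entrywise product; $\operatorname{diag}B$ is the diagonal matrix with the diagonal of $B$, $\widetilde B=B-\operatorname{diag}B$, $|\operatorname{diag}X\rangle$ is the vector of diagonal entries of $X$ and $\operatorname{diag}(v)$ the diagonal matrix with diagonal $v$. For a pair $(A,B)$ with equal diagonals, $\Phi^{(1)}_{(A,B)}(X)=\operatorname{diag}(A|\operatorname{diag}X\rangle)+\widetilde B\odot X^\top$ and $\Phi^{(2)}_{(A,B)}(X)=\operatorname{diag}(A|\operatorname{diag}X\rangle)+\widetilde B\odot X$. The compositions are $(A_1,B_1)\circ_1(A_2,B_2)=(A_1A_2,\ B_1\odot B_2^\top+\operatorname{diag}(A_1A_2-B_1\odot B_2))$ and $(A_1,B_1)\circ_2(A_2,B_2)=(A_1A_2,\ B_1\odot B_2+\operatorname{diag}(A_1A_2-B_1\odot B_2))$. *)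

(* Defs.v *)
From HB Require Import structures.
From mathcomp Require Import all_boot all_order all_algebra.
From mathcomp Require Import complex.
From mathcomp Require Import reals.
Set Implicit Arguments. Unset Strict Implicit. Unset Printing Implicit Defensive.
Import Order.TTheory GRing.Theory Num.Theory.
Local Open Scope ring_scope.

Section Defs.
Variable C : numClosedFieldType.
Variable d : nat.
Local Notation M := 'M[C]_d.

Definition adjmx (U : M) : M := (map_mx Num.conj U)^T.

Definition diag_unitary (U : M) : Prop :=
  is_diag_mx U /\ U *m adjmx U = 1%:M.

Definition linmap (f : M -> M) : Prop :=
  forall (a : C) (X Y : M), f (a *: X + Y) = a *: f X + f Y.

Definition DUC (f : M -> M) : Prop :=
  linmap f /\ forall U X, diag_unitary U -> f (U *m X *m adjmx U) = adjmx U *m f X *m U.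

Definition CDUC (f : M -> M) : Prop :=
  linmap f /\ forall U X, diag_unitary U -> f (U *m X *m adjmx U) = U *m f X *m adjmx U.

Definition stable_comp (K : (M -> M) -> Prop) : Prop :=
  forall f g, K f -> K g -> K (f \o g).

Definition hadamard (A B : M) : M := \matrix_(i, j) (A i j * B i j).

Definition diagv (X : M) : 'cV[C]_d := \col_i X i i.
Definition diagm (v : 'cV[C]_d) : M := diag_mx v^T.
Definition diagpart (B : M) : M := diagm (diagv B).
Definition offdiag (B : M) : M := B - diagpart B.

Definition Phi1 (A B : M) (X : M) : M :=
  diagm (A *m diagv X) + hadamard (offdiag B) X^T.
Definition Phi2 (A B : M) (X : M) : M :=
  diagm (A *m diagv X) + hadamard (offdiag B) X.

Definition comp1 (A1 B1 A2 B2 : M) : M * M :=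
  (A1 *m A2, hadamard B1 B2^T + diagpart (A1 *m A2 - hadamard B1 B2)).
Definition comp2 (A1 B1 A2 B2 : M) : M * M :=
  (A1 *m A2, hadamard B1 B2 + diagpart (A1 *m A2 - hadamard B1 B2)).

End Defs.

(* Main.v *)
Require Import Defs.
From HB Require Import structures.
From mathcomp Require Import all_boot all_order all_algebra.
From mathcomp Require Import complex.
From mathcomp Require Import reals.
Import Order.TTheory GRing.Theory Num.Theory.
Local Open Scope ring_scope.

Section H.
Variable C : numClosedFieldType.
Variable d : nat.
Implicit Types A B X : 'M[C]_d.

Lemma diagm_E (v : 'cV[C]_d) i j : diagm v i j = v i 0 *+ (i == j).
Proof. by rewrite /diagm !mxE. Qed.

Lemma offdiag_E B i j : offdiag B i j = if i == j then 0 else B i j.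
Proof.
rewrite /offdiag /diagpart /diagm /diagv !mxE.
case: eqP => [->|_]; by rewrite ?mulr1n ?subrr ?mulr0n ?subr0.
Qed.

Lemma diagpart_off B i j : i != j -> diagpart B i j = 0.
Proof. by move=> /negPf h; rewrite /diagpart diagm_E h. Qed.

Lemma Phi1_diag A B X i : Phi1 A B X i i = (A *m diagv X) i 0.
Proof. by rewrite /Phi1 /diagm /hadamard !mxE eqxx mulr1n subrr mul0r addr0. Qed.
Lemma Phi2_diag A B X i : Phi2 A B X i i = (A *m diagv X) i 0.
Proof. by rewrite /Phi2 /diagm /hadamard !mxE eqxx mulr1n subrr mul0r addr0. Qed.
Lemma Phi1_off A B X i j : i != j -> Phi1 A B X i j = B i j * X j i.
Proof. by move=> /negPf h; rewrite /Phi1 /diagm /hadamard !mxE h mulr0n subr0 add0r. Qed.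
Lemma Phi2_off A B X i j : i != j -> Phi2 A B X i j = B i j * X i j.
Proof. by move=> /negPf h; rewrite /Phi2 /diagm /hadamard !mxE h mulr0n subr0 add0r. Qed.

Lemma diagv_Phi1 A B X : diagv (Phi1 A B X) = A *m diagv X.
Proof. by apply/matrixP=> i k; rewrite ord1 /diagv mxE Phi1_diag. Qed.
Lemma diagv_Phi2 A B X : diagv (Phi2 A B X) = A *m diagv X.
Proof. by apply/matrixP=> i k; rewrite ord1 /diagv mxE Phi2_diag. Qed.

Lemma comp1_2E A1 B1 A2 B2 i j : i != j ->
  (comp1 A1 B1 A2 B2).2 i j = B1 i j * B2 j i.
Proof. by move=> /negPf h; rewrite /comp1 /= /diagpart /diagm /diagv /hadamard !mxE h mulr0n addr0. Qed.
Lemma comp2_2E A1 B1 A2 B2 i j : i != j ->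
  (comp2 A1 B1 A2 B2).2 i j = B1 i j * B2 i j.
Proof. by move=> /negPf h; rewrite /comp2 /= /diagpart /diagm /diagv /hadamard !mxE h mulr0n addr0. Qed.

Lemma diag_tr (U : 'M[C]_d) : is_diag_mx U -> U^T = U.
Proof.
move=> /is_diag_mxP hU; apply/matrixP=> i j; rewrite mxE.
case: (eqVneq i j) => [->//|h].
by rewrite !hU // eq_sym.
Qed.

Lemma diag_conj (U : 'M[C]_d) : is_diag_mx U -> is_diag_mx (map_mx Num.conj U).
Proof.
by move=> /is_diag_mxP hU; apply/is_diag_mxP=> i j h; rewrite mxE hU // conjC0.
Qed.

Lemma trT_DUC : DUC (@trmx C d d).
Proof.
split.
  by move=> a X Y; apply/matrixP=> i j; rewrite !mxE.
move=> U X [hU _]; rewrite !trmx_mul /adjmx trmxK.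
by rewrite (diag_tr _ hU) (diag_tr _ (diag_conj _ hU)) mulmxA.
Qed.

Lemma adjmx_diag (r : 'rV[C]_d) : adjmx (diag_mx r) = diag_mx (map_mx Num.conj r).
Proof.
apply/matrixP=> i j; rewrite /adjmx !mxE eq_sym.
by case: eqP => [->|]; rewrite ?mulr1n ?mulr0n ?conjC0.
Qed.

End H.

Lemma not_id_DUC (C : numClosedFieldType) n : ~ DUC (@id 'M[C]_n.+2).
Proof.
move=> [_ H].
pose r : 'rV[C]_n.+2 := \row_k (if k == 0 then 'i else 1).
have hU : diag_unitary (diag_mx r).
  split; first exact: diag_mx_is_diag.
  rewrite adjmx_diag mul_diag_mx; apply/matrixP=> i j; rewrite !mxE.
  case: (eqVneq i j) => [->|h]; last by rewrite mulr0n mulr0.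
  rewrite mulr1n; case: (j == 0); last by rewrite conjC1 mulr1.
  by rewrite conjCi mulrN mulCii opprK.
have := H _ (delta_mx 0 1) hU.
rewrite /= adjmx_diag !mul_diag_mx !mul_mx_diag => /matrixP /(_ 0 1).
rewrite !mxE /= conjC1 !mulr1 conjCi => /eqP.
rewrite -subr_eq0 opprK -mulr2n mulrn_eq0 /=.
by rewrite (negPf (@neq0Ci C)).
Qed.


Theorem proposition4p4 (R : realType) (d : nat) :
  stable_comp (@CDUC R[i] d)
  /\ ((2 <= d)%N -> ~ stable_comp (@DUC R[i] d))
  /\ (forall A1 B1 A2 B2 : 'M[R[i]]_d,
        diagpart A1 = diagpart B1 -> diagpart A2 = diagpart B2 ->
        [/\ forall X, Phi1 A1 B1 (Phi1 A2 B2 X)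
                      = Phi2 (comp1 A1 B1 A2 B2).1 (comp1 A1 B1 A2 B2).2 X,
            forall X, Phi2 A1 B1 (Phi2 A2 B2 X)
                      = Phi2 (comp2 A1 B1 A2 B2).1 (comp2 A1 B1 A2 B2).2 X,
            forall X, Phi1 A1 B1 (Phi2 A2 B2 X)
                      = Phi1 (comp1 A1 B1 A2 B2).1 (comp1 A1 B1 A2 B2).2 X
          & forall X, Phi2 A1 B1 (Phi1 A2 B2 X)
                      = Phi1 (comp2 A1 B1 A2 B2).1 (comp2 A1 B1 A2 B2).2 X]).
Proof.
split; last split.
- move=> f g [lf cf] [lg cg]; split.
    by move=> a X Y /=; rewrite lg lf.
  by move=> U X hU /=; rewrite cg // cf.
- case: d => [|[|n]] // _ Hs.
  have := Hs _ _ (@trT_DUC _ _) (@trT_DUC _ _).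
  move=> [_ H2]; apply: (@not_id_DUC R[i] n); split; first by [].
  by move=> U X hU; have := H2 U X hU; rewrite /= !trmxK.
move=> A1 B1 A2 B2 _ _; split=> X; apply/matrixP=> i j;
  (case: (eqVneq i j) => [<-|h]; last have h' : j != i by rewrite eq_sym).
- by rewrite Phi1_diag Phi2_diag diagv_Phi1 /= mulmxA.
- move: (@comp1_2E _ _ A1 B1 A2 B2 _ _ h); case: (comp1 A1 B1 A2 B2) => P Q /= HQ.
  by rewrite [in LHS](@Phi1_off _ _ A1 B1 _ _ _ h) [in LHS](@Phi1_off _ _ A2 B2 X _ _ h') [in RHS](@Phi2_off _ _ P Q X _ _ h) HQ mulrA.
- by rewrite Phi2_diag Phi2_diag diagv_Phi2 /= mulmxA.
- move: (@comp2_2E _ _ A1 B1 A2 B2 _ _ h); case: (comp2 A1 B1 A2 B2) => P Q /= HQ.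
  by rewrite [in LHS](@Phi2_off _ _ A1 B1 _ _ _ h) [in LHS](@Phi2_off _ _ A2 B2 X _ _ h) [in RHS](@Phi2_off _ _ P Q X _ _ h) HQ mulrA.
- by rewrite Phi1_diag Phi1_diag diagv_Phi2 /= mulmxA.
- move: (@comp1_2E _ _ A1 B1 A2 B2 _ _ h); case: (comp1 A1 B1 A2 B2) => P Q /= HQ.
  by rewrite [in LHS](@Phi1_off _ _ A1 B1 _ _ _ h) [in LHS](@Phi2_off _ _ A2 B2 X _ _ h') [in RHS](@Phi1_off _ _ P Q X _ _ h) HQ mulrA.
- by rewrite Phi2_diag Phi1_diag diagv_Phi1 /= mulmxA.
- move: (@comp2_2E _ _ A1 B1 A2 B2 _ _ h); case: (comp2 A1 B1 A2 B2) => P Q /= HQ.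
  by rewrite [in LHS](@Phi2_off _ _ A1 B1 _ _ _ h) [in LHS](@Phi1_off _ _ A2 B2 X _ _ h) [in RHS](@Phi1_off _ _ P Q X _ _ h) HQ mulrA.
Qed.
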